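(* Let $\Phi,\Psi$ be complementary $N$-functions both satisfying the $\Delta_2^0$-condition and let $\varphi=\{\varphi_k\}_{k=0}^\infty$, $\psi=\{\psi_k\}_{k=0}^\infty$ be weight sequences in $\mathcal{W}$. There exists a constant $C>0$ depending only on $\Phi,\Psi,\varphi,\psi$ such that for every $a\in W\cap F\ell_{\varphi,\psi}^{\Phi,\Psi}$, every $n\in\mathbb{N}$ and every $j\in\{0,\dots,n\}$, \[ \|Q_nT(a)\Delta_j\|_{\mathcal{B}(\ell^\Psi(\mathbb{Z}_+))}\le C\,\frac{\|a-a^{(n-j)}\|_{F\ell_{\varphi,\psi}^{\Phi,\Psi}}}{\psi_{n-j+1}}, \qquad \|\Delta_jT(a)Q_n\|_{\mathcal{B}(\ell^\Psi(\mathbb{Z}_+))}\le C\,\frac{\|a-a^{(n-j)}\|_{F\ell_{\varphi,\psi}^{\Phi,\Psi}}}{\varphi_{n-j+1}}. \]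
   Context: $\mathbb{T}$ is the unit circle; $f_k$ denote Fourier coefficients of $f\in L^1(\mathbb{T})$. $W$ is the Wiener algebra of $a(t)=\sum_ka_kt^k$ with $\sum_k|a_k|<\infty$. Complementary $N$-functions: for $p:[0,\infty)\to[0,\infty)$ right-continuous non-decreasing with $p(0)=0$, $p(t)>0$ for $t>0$, $p(t)\to\infty$, and $q(s)=\sup\{t:p(t)\le s\}$, set $\Phi(x)=\int_0^xp$, $\Psi(x)=\int_0^xq$. $\Delta_2^0$-condition: $\limsup_{x\to0}\Phi(2x)/\Phi(x)<\infty$. $\mathcal{W}$: sequences $\{\nu_k\}_{k\ge0}$ of positive numbers with $\nu_0=1$, non-decreasing, and $\nu_{2k}\le C_\nu\nu_k$ ($k\in\mathbb{N}$) for some constant $C_\nu$. For $\mathbb{I}\in\{\mathbb{N},\mathbb{Z}_+\}$, an $N$-function $\Theta$ and a weight sequence $w$, $\ell^\Theta_w(\mathbb{I})$ is the space of complex sequences $(c_k)_{k\in\mathbb{I}}$ with $\sum_k\Theta(|c_k|w_k/\lambda)<\infty$ for some $\lambda>0$, normed by $\|c\|=\inf\{\lambda>0:\sum_k\Theta(|c_k|w_k/\lambda)\le1\}$; $\ell^\Theta(\mathbb{I})$ is the case $w_k\equiv1$. $F\ell_{\varphi,\psi}^{\Phi,\Psi}$ is the set of $a\in L^1(\mathbb{T})$ with $\sum_{k\ge1}\Phi(|a_{-k}|\varphi_k)+\sum_{k\ge0}\Psi(|a_k|\psi_k)<\infty$, normed by $\|a\|_{F\ell_{\varphi,\psi}^{\Phi,\Psi}}=\|\{a_{-k}\}_{k\in\mathbb{N}}\|_{\ell^\Phi_\varphi(\mathbb{N})}+\|\{a_k\}_{k\in\mathbb{Z}_+}\|_{\ell^\Psi_\psi(\mathbb{Z}_+)}$.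 For $m\in\mathbb{Z}_+$, $a^{(m)}(t)=\sum_{k=-m}^ma_kt^k$. $T(a)$ is the Toeplitz operator on sequences $(c_k)_{k\ge0}$ with matrix $(a_{j-k})_{j,k\ge0}$. $P_n$ maps $(c_k)_{k\ge0}$ to $(c_0,\dots,c_n,0,0,\dots)$, $Q_n=I-P_n$, $\Delta_0=P_0$, $\Delta_j=P_j-P_{j-1}$. $\mathcal{B}(X)$ is the algebra of bounded operators on $X$ with the operator norm. *)

(* Defs.v *)
From Stdlib Require Import Reals ZArith.
From Coquelicot Require Import Coquelicot.
Open Scope R_scope.

(** Generating function p of an N-function: p : [0,oo) -> [0,oo),
    right-continuous, non-decreasing, p 0 = 0, p t > 0 for t > 0, p t -> oo.
    (Values of p on negative reals are irrelevant.) *)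
Definition N_generator (p : R -> R) : Prop :=
  (forall s t, 0 <= s -> s <= t -> p s <= p t) /\
  p 0 = 0 /\
  (forall t, 0 < t -> 0 < p t) /\
  (forall t, 0 <= t -> filterlim p (at_right t) (locally (p t))) /\
  filterlim p (Rbar_locally p_infty) (Rbar_locally p_infty).

Definition q_of (p : R -> R) (s : R) : R :=
  real (Lub_Rbar (fun t => 0 <= t /\ p t <= s)).

Definition Phi_of (p : R -> R) (x : R) : R := RInt p 0 x.
Definition Psi_of (p : R -> R) (x : R) : R := RInt (q_of p) 0 x.

(** Delta_2^0 condition: limsup_{x -> 0+} Theta(2x)/Theta(x) < oo,
    i.e. the ratio is eventually bounded near 0. *)
Definition Delta2_0 (Theta : R -> R) : Prop :=
  exists M delta, 0 < delta /\
    forall x, 0 < x < delta -> Theta (2 * x) / Theta x <= M.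

Definition weight_W (nu : nat -> R) : Prop :=
  nu 0%nat = 1 /\
  (forall k, 0 < nu k) /\
  (forall k l, (k <= l)%nat -> nu k <= nu l) /\
  exists Cnu, forall k, (1 <= k)%nat -> nu (2 * k)%nat <= Cnu * nu k.

(** Orlicz modular space on a sequence of nonnegative reals x
    (x k = |c_k| w_k): membership and Luxemburg norm. *)
Definition in_orlicz (Theta : R -> R) (x : nat -> R) : Prop :=
  exists lam, 0 < lam /\ ex_series (fun k => Theta (x k / lam)).

Definition lux_norm (Theta : R -> R) (x : nat -> R) : R :=
  real (Glb_Rbar (fun lam => 0 < lam /\
          ex_series (fun k => Theta (x k / lam)) /\
          Series (fun k => Theta (x k / lam)) <= 1)).

Definition cseq := nat -> C.
Definition op := cseq -> cseq.

Definition in_lTheta (Theta : R -> R) (c : cseq) : Prop :=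
  in_orlicz Theta (fun k => Cmod (c k)).
Definition lTheta_norm (Theta : R -> R) (c : cseq) : R :=
  lux_norm Theta (fun k => Cmod (c k)).

(** Operator norm in B(ell^Theta(Z_+)): infimum of the bounds K
    (= +oo if the operator is not bounded on ell^Theta). *)
Definition op_norm (Theta : R -> R) (A : op) : Rbar :=
  Glb_Rbar (fun K => 0 <= K /\
    forall c, in_lTheta Theta c ->
      in_lTheta Theta (A c) /\
      lTheta_norm Theta (A c) <= K * lTheta_norm Theta c).

Definition csum (u : nat -> C) : C :=
  (Series (fun k => fst (u k)), Series (fun k => snd (u k))).

(** Functions a in L^1(T) with Fourier coefficients a : Z -> C;
    Wiener algebra: absolutely summable coefficients. *)
Definition coeffs := Z -> C.

Definition in_Wiener (a : coeffs) : Prop :=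
  ex_series (fun k => Cmod (a (Z.of_nat k))) /\
  ex_series (fun k => Cmod (a (- Z.of_nat (S k))%Z)).

Definition in_Fl (Phi Psi : R -> R) (phi psi : nat -> R) (a : coeffs) : Prop :=
  ex_series (fun k => Phi (Cmod (a (- Z.of_nat (S k))%Z) * phi (S k))) /\
  ex_series (fun k => Psi (Cmod (a (Z.of_nat k)) * psi k)).

Definition Fl_norm (Phi Psi : R -> R) (phi psi : nat -> R) (a : coeffs) : R :=
  lux_norm Phi (fun k => Cmod (a (- Z.of_nat (S k))%Z) * phi (S k)) +
  lux_norm Psi (fun k => Cmod (a (Z.of_nat k)) * psi k).

Definition trunc (m : nat) (a : coeffs) : coeffs :=
  fun k => if ((- Z.of_nat m <=? k)%Z && (k <=? Z.of_nat m)%Z)%bool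
           then a k else RtoC 0.
Definition csub (a b : coeffs) : coeffs := fun k => Cminus (a k) (b k).

Definition Toeplitz (a : coeffs) : op :=
  fun c i => csum (fun k => Cmult (a (Z.of_nat i - Z.of_nat k)%Z) (c k)).

Definition Pn (n : nat) : op :=
  fun c i => if (i <=? n)%nat then c i else RtoC 0.
Definition Qn (n : nat) : op := fun c i => Cminus (c i) (Pn n c i).
Definition DeltaJ (j : nat) : op :=
  match j with
  | O => Pn 0
  | S j' => fun c i => Cminus (Pn (S j') c i) (Pn j' c i)
  end.

Definition compo (A B : op) : op := fun c => A (B c).

(* Main.v *)
Require Import Defs.
From Stdlib Require Import Reals ZArith Lra Lia ClassicalEpsilon.
From Coquelicot Require Import Coquelicot.
Open Scope R_scope.

Lemma step_int (G : R -> R) (e a b : R) : a <= b ->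
  (forall x y, x <= y -> G x <= G y) ->
  ex_RInt (fun x => if Rle_dec e (G x) then e else 0) a b.
Proof.
  intros hab hG.
  set (E := fun x => x = a \/ (a <= x <= b /\ G x < e)).
  destruct (Lub_Rbar_correct E) as [Hub Hl].
  assert (H1 : Rbar_le a (Lub_Rbar E)) by (apply Hub; left; reflexivity).
  assert (H2 : Rbar_le (Lub_Rbar E) b).
  { apply Hl. intros x [->|[[? ?] _]]; simpl; lra. }
  destruct (Lub_Rbar E) as [s| |] eqn:Hs; simpl in H1, H2; try contradiction.
  assert (Hlow : forall x, a < x < s -> G x < e).
  { intros x hx. destruct (Rlt_dec (G x) e) as [h|h]; auto.
    exfalso. assert (Rbar_le s x).
    { apply Hl. intros y [->|[_ hy]]; simpl; try lra.
      destruct (Rle_dec x y) as [hxy|hxy]; [|lra].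
      specialize (hG _ _ hxy). lra. }
    simpl in H; lra. }
  assert (Hhigh : forall x, s < x < b -> e <= G x).
  { intros x hx. destruct (Rle_dec e (G x)) as [h|h]; auto.
    exfalso. assert (Rbar_le x s). { apply Hub. right. split; lra. }
    simpl in H; lra. }
  apply ex_RInt_Chasles with s.
  - apply ex_RInt_ext with (fun _ => 0).
    + intros x hx. rewrite Rmin_left in hx by lra. rewrite Rmax_right in hx by lra.
      destruct (Rle_dec e (G x)); auto. specialize (Hlow x hx); lra.
    + apply ex_RInt_const.
  - apply ex_RInt_ext with (fun _ => e).
    + intros x hx. rewrite Rmin_left in hx by lra. rewrite Rmax_right in hx by lra.
      destruct (Rle_dec e (G x)); auto. specialize (Hhigh x hx); lra.
    + apply ex_RInt_const.
Qed.

Lemma approx (e a b : R) : 0 < e -> a <= b -> forall K : nat, forall G : R -> R,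
  (forall x y, x <= y -> G x <= G y) -> (forall x, 0 <= G x <= INR K * e) ->
  exists phi : R -> R, ex_RInt phi a b /\
    forall x, 0 <= phi x <= G x /\ G x - phi x <= e.
Proof.
  intros he hab K. induction K as [|K IH]; intros G hG hb.
  - exists (fun _ => 0). split. apply ex_RInt_const.
    intros x. specialize (hb x). simpl in hb. lra.
  - set (G1 := fun x => Rmax (G x - e) 0).
    destruct (IH G1) as [phi1 [hi1 hp1]].
    + intros x y hxy. unfold G1. specialize (hG _ _ hxy).
      unfold Rmax; repeat destruct Rle_dec; lra.
    + intros x. unfold G1. specialize (hb x). rewrite S_INR in hb.
      pose proof (pos_INR K). assert (0 <= INR K * e) by nra.
      unfold Rmax; destruct Rle_dec; lra.
    + exists (fun x => (if Rle_dec e (G x) then e else 0) + phi1 x). split.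
      * apply (ex_RInt_plus (V := R_NormedModule)).
        apply step_int; auto. exact hi1.
      * intros x. specialize (hp1 x). specialize (hb x). unfold G1 in hp1.
        destruct (Rle_dec e (G x)).
        -- rewrite Rmax_left in hp1 by lra. lra.
        -- rewrite Rmax_right in hp1 by lra. lra.
Qed.

Lemma mono_int (g : R -> R) (a b : R) : a <= b ->
  (forall x y, a <= x -> x <= y -> y <= b -> g x <= g y) -> ex_RInt g a b.
Proof.
  intros hab hg.
  set (gt := fun x => g (Rmax a (Rmin x b))).
  assert (hgt : forall x y, x <= y -> gt x <= gt y).
  { intros x y hxy. unfold gt. apply hg;
    unfold Rmax, Rmin; repeat destruct Rle_dec; lra. }
  set (M := g b - g a).
  assert (hM : 0 <= M) by (unfold M; assert (g a <= g b) by (apply hg; lra); lra).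
  set (G := fun x => gt x - g a).
  assert (hG : forall x y, x <= y -> G x <= G y).
  { intros x y h. unfold G. specialize (hgt _ _ h). lra. }
  assert (hGb : forall x, 0 <= G x <= M).
  { intros x. unfold G, M, gt. split.
    - assert (g a <= g (Rmax a (Rmin x b))) by (apply hg; unfold Rmax, Rmin; repeat destruct Rle_dec; lra). lra.
    - assert (g (Rmax a (Rmin x b)) <= g b) by (apply hg; unfold Rmax, Rmin; repeat destruct Rle_dec; lra). lra. }
  set (eN := fun N : nat => (M + 1) / (INR N + 1)).
  assert (heN : forall N, 0 < eN N).
  { intros N. unfold eN. pose proof (pos_INR N). apply Rdiv_lt_0_compat; lra. }
  assert (hex : forall N : nat, exists phi : R -> R, ex_RInt phi a b /\
    forall x, 0 <= phi x <= G x /\ G x - phi x <= eN N).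
  { intros N. apply approx with (K := S N); auto.
    intros x. specialize (hGb x). rewrite S_INR. unfold eN.
    pose proof (pos_INR N).
    assert ((INR N + 1) * ((M + 1) / (INR N + 1)) = M + 1) by (field; lra). lra. }
  set (phis := fun N => proj1_sig (constructive_indefinite_description _ (hex N))).
  assert (hphis : forall N, ex_RInt (phis N) a b /\
    forall x, 0 <= phis N x <= G x /\ G x - phis N x <= eN N).
  { intros N. unfold phis. destruct constructive_indefinite_description; auto. }
  assert (Hlim : filterlim phis eventually (locally (G : fct_UniformSpace R R_UniformSpace))).
  { apply filterlim_locally. intros eps.
    destruct (INR_archimed (pos eps) (M + 1) (cond_pos eps)) as [n0 hn0].
    exists n0. intros N hN. intros t.
    change (Rabs (phis N t + - G t) < eps).
    destruct (hphis N) as [_ hb]. specialize (hb t).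
    assert (eN N < eps).
    { unfold eN. apply le_INR in hN. pose proof (pos_INR n0).
      pose proof (cond_pos eps).
      apply Rmult_lt_reg_r with (INR N + 1). lra.
      field_simplify; try lra. nra. }
    rewrite Rabs_left1; lra. }
  destruct (filterlim_RInt (V := R_CompleteNormedModule) phis a b eventually eventually_filter G
     (fun N => RInt (phis N) a b)) as [If [_ HIf]].
  - intros N. apply (RInt_correct (V := R_CompleteNormedModule)). apply hphis.
  - exact Hlim.
  - assert (hGi : ex_RInt G a b) by (exists If; exact HIf).
    apply ex_RInt_ext with gt.
    + intros x hx. rewrite Rmin_left in hx by lra. rewrite Rmax_right in hx by lra.
      unfold gt. f_equal. unfold Rmax, Rmin; repeat destruct Rle_dec; lra.
    + apply ex_RInt_ext with (fun x => G x + g a).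
      * intros x _. unfold G. change (gt x - g a + g a = gt x). ring.
      * apply (ex_RInt_plus (V := R_NormedModule)). exact hGi. apply ex_RInt_const.
Qed.
Definition goodg (g : R -> R) : Prop :=
  (forall x y, 0 <= x -> x <= y -> g x <= g y) /\ (forall x, 0 <= x -> 0 <= g x).

Lemma goodg_int g a b : goodg g -> 0 <= a -> a <= b -> ex_RInt g a b.
Proof.
  intros [hm hn] ha hab. apply mono_int; auto. intros x y hx hxy _. apply hm; lra.
Qed.

Lemma goodg_bounds g a b : goodg g -> 0 <= a -> a <= b ->
  (b - a) * g a <= RInt g a b <= (b - a) * g b.
Proof.
  intros hg ha hab. pose proof (goodg_int g a b hg ha hab) as hi.
  destruct hg as [hm hn]. split.
  - replace ((b - a) * g a) with (RInt (fun _ => g a) a b).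
    2:{ rewrite RInt_const. reflexivity. }
    apply RInt_le; auto. apply ex_RInt_const. intros x hx. apply hm; lra.
  - replace ((b - a) * g b) with (RInt (fun _ => g b) a b).
    2:{ rewrite RInt_const. reflexivity. }
    apply RInt_le; auto. apply ex_RInt_const. intros x hx. apply hm; lra.
Qed.

Lemma goodg_chasles g a b c : goodg g -> 0 <= a -> a <= b -> b <= c ->
  RInt g a c = RInt g a b + RInt g b c.
Proof.
  intros hg ha hab hbc. symmetry.
  apply (RInt_Chasles (V := R_CompleteNormedModule));
  apply goodg_int; auto; lra.
Qed.

Lemma goodg_0 g : RInt g 0 0 = 0.
Proof. rewrite RInt_point. reflexivity. Qed.

Lemma goodg_nonneg g x : goodg g -> 0 <= x -> 0 <= RInt g 0 x.
Proof.
  intros hg hx. pose proof (goodg_bounds g 0 x hg (Rle_refl 0) hx).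
  destruct hg as [_ hn]. specialize (hn 0 (Rle_refl 0)). nra.
Qed.

Lemma goodg_mono g x y : goodg g -> 0 <= x -> x <= y -> RInt g 0 x <= RInt g 0 y.
Proof.
  intros hg hx hxy. rewrite (goodg_chasles g 0 x y) by (auto; lra).
  pose proof (goodg_bounds g x y hg hx hxy).
  destruct hg as [_ hn]. specialize (hn x hx). nra.
Qed.

Lemma goodg_lower g x : goodg g -> 0 <= x -> x * g x <= RInt g 0 (2 * x).
Proof.
  intros hg hx. rewrite (goodg_chasles g 0 x (2 * x)) by (auto; lra).
  pose proof (goodg_bounds g x (2 * x) hg hx ltac:(lra)).
  pose proof (goodg_nonneg g x hg hx). lra.
Qed.

Lemma goodg_upper g x : goodg g -> 0 <= x -> RInt g 0 x <= x * g x.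
Proof.
  intros hg hx. pose proof (goodg_bounds g 0 x hg (Rle_refl 0) hx). lra.
Qed.

Lemma goodg_convex g t s : goodg g -> 0 <= t <= 1 -> 0 <= s ->
  RInt g 0 (t * s) <= t * RInt g 0 s.
Proof.
  intros hg ht hs.
  assert (hts : 0 <= t * s) by nra. assert (hts2 : t * s <= s) by nra.
  rewrite (goodg_chasles g 0 (t * s) s) by (auto; lra).
  pose proof (goodg_upper g (t * s) hg hts).
  pose proof (goodg_bounds g (t * s) s hg hts hts2).
  pose proof (goodg_nonneg g (t * s) hg hts).
  destruct hg as [_ hn]. specialize (hn _ hts).
  set (A := RInt g 0 (t * s)) in *. set (B := RInt g (t * s) s) in *.
  assert ((1 - t) * A <= t * B).
  { apply Rle_trans with ((1 - t) * (t * s * g (t * s))).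
    apply Rmult_le_compat_l; lra.
    replace ((1 - t) * (t * s * g (t * s))) with (t * ((s - t * s) * g (t * s))) by ring.
    apply Rmult_le_compat_l; lra. }
  nra.
Qed.
Lemma p_good p : N_generator p -> goodg p.
Proof.
  intros [hm [h0 _]]. split. intros; apply hm; lra.
  intros x hx. rewrite <- h0. apply hm; lra.
Qed.

Lemma p_bounded p s : N_generator p -> exists T, forall t, p t <= s -> t <= T.
Proof.
  intros [_ [_ [_ [_ hinf]]]].
  destruct (hinf (fun y => s < y)) as [M hM].
  - exists s. auto.
  - exists M. intros t ht. destruct (Rle_dec t M); auto.
    specialize (hM t ltac:(lra)). lra.
Qed.

Lemma q_fin p s : N_generator p -> 0 <= s ->
  Lub_Rbar (fun t => 0 <= t /\ p t <= s) = Finite (q_of p s) /\ 0 <= q_of p s.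
Proof.
  intros hp hs. destruct (p_bounded p s hp) as [T hT].
  destruct (Lub_Rbar_correct (fun t => 0 <= t /\ p t <= s)) as [hub hl].
  assert (h1 : Rbar_le 0 (Lub_Rbar (fun t => 0 <= t /\ p t <= s))).
  { apply hub. split. lra. destruct hp as [_ [h0 _]]. lra. }
  assert (h2 : Rbar_le (Lub_Rbar (fun t => 0 <= t /\ p t <= s)) T).
  { apply hl. intros t [_ ht]. simpl. auto. }
  unfold q_of. destruct (Lub_Rbar _); simpl in *; try contradiction. auto.
Qed.

Lemma q_ub p s t : N_generator p -> 0 <= s -> 0 <= t -> p t <= s -> t <= q_of p s.
Proof.
  intros hp hs ht hpt. destruct (q_fin p s hp hs) as [he _].
  destruct (Lub_Rbar_correct (fun t => 0 <= t /\ p t <= s)) as [hub _].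
  rewrite he in hub. apply (hub t). auto.
Qed.

Lemma q_least p s B : N_generator p -> 0 <= s ->
  (forall t, 0 <= t -> p t <= s -> t <= B) -> q_of p s <= B.
Proof.
  intros hp hs hB. destruct (q_fin p s hp hs) as [he _].
  destruct (Lub_Rbar_correct (fun t => 0 <= t /\ p t <= s)) as [_ hl].
  rewrite he in hl. apply (hl B). intros t [ht1 ht2]. simpl. auto.
Qed.

Lemma q_good p : N_generator p -> goodg (q_of p).
Proof.
  intros hp. split.
  - intros x y hx hxy. apply q_least; auto; try lra.
    intros t ht hpt. apply q_ub; auto; lra.
  - intros x hx. apply (q_fin p x hp hx).
Qed.

Lemma q_pos p v : N_generator p -> 0 < v -> 0 < q_of p v.
Proof.
  intros hp hv. pose proof hp as [_ [h0 [_ [hrc _]]]].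
  specialize (hrc 0 (Rle_refl 0)).
  destruct (proj1 (filterlim_locally _ _) hrc (mkposreal v hv)) as [d hd].
  pose proof (cond_pos d) as hd0.
  specialize (hd (d / 2)).
  assert (hb : ball 0 d (d / 2)).
  { change (Rabs (d / 2 + - 0) < d). rewrite Rabs_right; lra. }
  specialize (hd hb ltac:(lra)).
  change (Rabs (p (d / 2) + - p 0) < v) in hd. rewrite h0 in hd.
  assert (p (d / 2) < v) by (apply Rabs_def2 in hd; lra).
  assert (d / 2 <= q_of p v) by (apply q_ub; auto; lra). lra.
Qed.

Lemma young p u v : N_generator p -> 0 <= u -> 0 <= v ->
  u * v <= Phi_of p (2 * u) + Psi_of p (2 * v).
Proof.
  intros hp hu hv. unfold Phi_of, Psi_of.
  pose proof (goodg_lower p u (p_good p hp) hu).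
  pose proof (goodg_lower (q_of p) v (q_good p hp) hv).
  pose proof (goodg_nonneg p (2 * u) (p_good p hp) ltac:(lra)).
  pose proof (goodg_nonneg (q_of p) (2 * v) (q_good p hp) ltac:(lra)).
  destruct (Rle_dec v (p u)).
  - assert (u * v <= u * p u) by (apply Rmult_le_compat_l; lra). lra.
  - assert (u <= q_of p v) by (apply q_ub; auto; lra).
    assert (u * v <= v * q_of p v) by nra. lra.
Qed.

Lemma psi_t0 p : N_generator p -> exists t0, 0 < t0 /\
  forall x, 0 <= x -> Psi_of p x <= 1 -> x <= t0.
Proof.
  intros hp. pose proof (q_pos p 1 hp ltac:(lra)) as hq1.
  set (x1 := 1 + 2 / q_of p 1).
  assert (hx1 : 1 <= x1). { unfold x1. assert (0 < 2 / q_of p 1) by (apply Rdiv_lt_0_compat; lra). lra. }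
  exists (2 * x1). split. lra.
  intros x hx hPx. destruct (Rle_dec x (2 * x1)) as [h|h]; auto. exfalso.
  pose proof (goodg_lower (q_of p) x1 (q_good p hp) ltac:(lra)).
  assert (q_of p 1 <= q_of p x1) by (apply (proj1 (q_good p hp)); lra).
  assert (x1 * q_of p 1 = q_of p 1 + 2) by (unfold x1; field; lra).
  assert (x1 * q_of p 1 <= x1 * q_of p x1) by (apply Rmult_le_compat_l; lra).
  pose proof (goodg_mono (q_of p) (2 * x1) x (q_good p hp) ltac:(lra) ltac:(lra)).
  unfold Psi_of in hPx. lra.
Qed.

Lemma psi_u0 p : N_generator p -> exists u0, 0 < u0 /\ Psi_of p u0 <= 1.
Proof.
  intros hp. pose proof (goodg_nonneg (q_of p) 1 (q_good p hp) ltac:(lra)).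
  exists (1 / (1 + Psi_of p 1)). unfold Psi_of in *. split.
  apply Rdiv_lt_0_compat; lra.
  pose proof (goodg_convex (q_of p) (1 / (1 + RInt (q_of p) 0 1)) 1 (q_good p hp)).
  rewrite Rmult_1_r in H0.
  assert (0 <= 1 / (1 + RInt (q_of p) 0 1) <= 1).
  { split. apply Rlt_le, Rdiv_lt_0_compat; lra.
    apply Rmult_le_reg_r with (1 + RInt (q_of p) 0 1). lra.
    field_simplify; lra. }
  specialize (H0 H1 ltac:(lra)).
  assert (1 / (1 + RInt (q_of p) 0 1) * RInt (q_of p) 0 1 <= 1).
  { apply Rmult_le_reg_r with (1 + RInt (q_of p) 0 1). lra.
    field_simplify; lra. }
  lra.
Qed.
Definition thetaP (Th : R -> R) : Prop :=
  Th 0 = 0 /\ (forall x, 0 <= x -> 0 <= Th x) /\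
  (forall x y, 0 <= x -> x <= y -> Th x <= Th y) /\
  (forall t s, 0 <= t <= 1 -> 0 <= s -> Th (t * s) <= t * Th s).

Lemma good_thetaP g : goodg g -> thetaP (fun x => RInt g 0 x).
Proof.
  intros hg. split; [|split; [|split]].
  - apply goodg_0.
  - intros; apply goodg_nonneg; auto.
  - intros; apply goodg_mono; auto.
  - intros; apply goodg_convex; auto.
Qed.

Definition adm (Th : R -> R) (x : nat -> R) (lam : R) : Prop :=
  0 < lam /\ ex_series (fun k => Th (x k / lam)) /\ Series (fun k => Th (x k / lam)) <= 1.

Lemma lux_nonneg Th x : 0 <= lux_norm Th x.
Proof.
  unfold lux_norm. destruct (Glb_Rbar_correct (adm Th x)) as [hlb hgl].
  assert (Rbar_le 0 (Glb_Rbar (adm Th x))).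
  { apply hgl. intros l [hl _]. simpl. lra. }
  change (0 <= real (Glb_Rbar (adm Th x))).
  destruct (Glb_Rbar (adm Th x)); simpl in *; lra.
Qed.

Lemma lux_le Th x lam : adm Th x lam -> lux_norm Th x <= lam.
Proof.
  intros ha. unfold lux_norm. destruct (Glb_Rbar_correct (adm Th x)) as [hlb hgl].
  assert (Rbar_le 0 (Glb_Rbar (adm Th x))).
  { apply hgl. intros l [hl _]. simpl. lra. }
  specialize (hlb lam ha).
  change (real (Glb_Rbar (adm Th x)) <= lam).
  destruct (Glb_Rbar (adm Th x)); simpl in *; try contradiction; lra.
Qed.

Lemma lux_ge Th x B K : (exists lam, adm Th x lam) -> 0 <= K ->
  (forall lam, adm Th x lam -> B <= K * lam) -> B <= K * lux_norm Th x.
Proof.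
  intros [l0 h0] hK hB. destruct (Req_dec K 0) as [->|hK0].
  - specialize (hB l0 h0). lra.
  - assert (Rbar_le (B / K) (Glb_Rbar (adm Th x))).
    { destruct (Glb_Rbar_correct (adm Th x)) as [_ hgl]. apply hgl.
      intros l hl. specialize (hB l hl). simpl.
      apply Rmult_le_reg_r with K. lra. field_simplify; lra. }
    pose proof (lux_le Th x l0 h0). unfold lux_norm in *.
    change (B <= K * real (Glb_Rbar (adm Th x))).
    change (real (Glb_Rbar (adm Th x)) <= l0) in H0.
    destruct (Glb_Rbar_correct (adm Th x)) as [hlb _].
    specialize (hlb l0 h0).
    destruct (Glb_Rbar (adm Th x)); simpl in *; try contradiction.
    apply Rmult_le_reg_r with (/ K). apply Rinv_0_lt_compat; lra.
    replace (K * r * / K) with r by (field; lra). exact H.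
Qed.

Lemma Series_nonneg (f : nat -> R) : (forall k, 0 <= f k) -> ex_series f -> 0 <= Series f.
Proof.
  intros hf he.
  assert (Series (fun k => 0 * f k) <= Series f).
  { apply Series_le; auto. intros n; specialize (hf n); lra. }
  rewrite Series_scal_l in H. lra.
Qed.

Lemma adm_exists Th x lam : thetaP Th -> (forall k, 0 <= x k) -> 0 < lam ->
  ex_series (fun k => Th (x k / lam)) -> exists mu, adm Th x mu.
Proof.
  intros [h0 [hn [hm hc]]] hx hl he.
  set (S := Series (fun k => Th (x k / lam))).
  assert (hS : 0 <= S).
  { apply Series_nonneg; auto. intros k. apply hn. apply Rdiv_le_0_compat; auto. }
  assert (hb : forall k, 0 <= Th (x k / (lam * (1 + S))) <= / (1 + S) * Th (x k / lam)).
  { intros k. replace (x k / (lam * (1 + S))) with (/ (1 + S) * (x k / lam)) by (field; lra).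
    split. apply hn. apply Rmult_le_pos. apply Rlt_le, Rinv_0_lt_compat; lra.
    apply Rdiv_le_0_compat; auto.
    apply hc. split. apply Rlt_le, Rinv_0_lt_compat; lra.
    apply Rmult_le_reg_r with (1 + S). lra. rewrite Rinv_l; lra.
    apply Rdiv_le_0_compat; auto. }
  assert (he2 : ex_series (fun k => / (1 + S) * Th (x k / lam))).
  { apply (ex_series_scal_l (V := R_NormedModule)). exact he. }
  exists (lam * (1 + S)). split; [|split].
  - nra.
  - apply (ex_series_le (V := R_CompleteNormedModule)) with (fun k => / (1 + S) * Th (x k / lam)); auto.
    intros k. specialize (hb k). change (Rabs (Th (x k / (lam * (1 + S)))) <= / (1 + S) * Th (x k / lam)).
    rewrite Rabs_right; lra.
  - eapply Rle_trans. apply Series_le. exact hb. exact he2.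
    rewrite Series_scal_l. fold S.
    apply Rmult_le_reg_r with (1 + S). lra.
    field_simplify; lra.
Qed.

Lemma sum_bump (j : nat) (v : R) (N : nat) :
  sum_f_R0 (fun k => if Nat.eqb k j then v else 0) N = if Nat.ltb N j then 0 else v.
Proof.
  induction N as [|N IH].
  - destruct j; simpl; reflexivity.
  - rewrite tech5, IH. destruct (Nat.ltb_spec N j); destruct (Nat.ltb_spec (S N) j);
    destruct (Nat.eqb_spec (S N) j); try lia; lra.
Qed.

Lemma bump_is_series (j : nat) (v : R) :
  is_series (fun k => if Nat.eqb k j then v else 0) v.
Proof.
  intros P HP. exists j. intros N hN. rewrite sum_n_Reals. rewrite sum_bump.
  destruct (Nat.ltb_spec N j); try lia. apply locally_singleton. exact HP.
Qed.

Lemma bump_Series (j : nat) (v : R) :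
  Series (fun k => if Nat.eqb k j then v else 0) = v.
Proof. apply is_series_unique, bump_is_series. Qed.

Lemma bump_ex (j : nat) (v : R) : ex_series (fun k => if Nat.eqb k j then v else 0).
Proof. exists v. apply bump_is_series. Qed.

Lemma term_le_Series (f : nat -> R) j : (forall k, 0 <= f k) -> ex_series f -> f j <= Series f.
Proof.
  intros hf he. rewrite <- (bump_Series j (f j)). apply Series_le; auto.
  intros n. destruct (Nat.eqb_spec n j). subst. split; auto. lra. split; auto. lra.
Qed.
Lemma shift_series (f : nat -> R) (n d : nat) : (forall k, 0 <= f k) -> ex_series f -> (d <= S n)%nat ->
  ex_series (fun i => if Nat.ltb n i then f (i - d)%nat else 0) /\
  Series (fun i => if Nat.ltb n i then f (i - d)%nat else 0) <= Series f.
Proof.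
  intros hf he hd. set (w := fun i => if Nat.ltb n i then f (i - d)%nat else 0).
  set (m := (S n - d)%nat).
  assert (hw : forall k, w (S n + k)%nat = f (m + k)%nat).
  { intros k. unfold w, m. destruct (Nat.ltb_spec n (S n + k)); try lia. f_equal. lia. }
  assert (hef : ex_series (fun k => f (m + k)%nat)) by (apply ex_series_incr_n; exact he).
  split.
  - apply (ex_series_incr_n w (S n)). apply ex_series_ext with (fun k => f (m + k)%nat); auto.
  - rewrite (Series_incr_n_aux w (S n)).
    2:{ intros k hk. unfold w. destruct (Nat.ltb_spec n k); try lia. reflexivity. }
    rewrite (Series_ext _ (fun k => f (m + k)%nat) hw).
    destruct m as [|m'] eqn:Hm.
    + apply Req_le. apply Series_ext. intros k. reflexivity.
    + rewrite (Series_incr_n f (S m')); auto; try lia.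
      pose proof (cond_pos_sum f (Nat.pred (S m')) hf). lra.
Qed.

Lemma C_eq (x y : Complex.C) : fst x = fst y -> snd x = snd y -> x = y.
Proof. destruct x, y; simpl; intros; subst; reflexivity. Qed.

Lemma Cminus_self (x : Complex.C) : Cminus x x = RtoC 0.
Proof. destruct x. apply C_eq; simpl; ring. Qed.

Lemma Cminus_0 (x : Complex.C) : Cminus x (RtoC 0) = x.
Proof. destruct x. apply C_eq; simpl; ring. Qed.

Lemma Cmult_0r (x : Complex.C) : Cmult x (RtoC 0) = RtoC 0.
Proof. destruct x. apply C_eq; simpl; ring. Qed.

Lemma DeltaJ_eq j c i : DeltaJ j c i = if Nat.eqb i j then c i else RtoC 0.
Proof.
  destruct j as [|j']; simpl; unfold Pn.
  - destruct i; reflexivity.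
  - destruct (Nat.leb_spec i (S j')); destruct (Nat.leb_spec i j'); destruct (Nat.eqb_spec i (S j'));
    try lia.
    + apply Cminus_self.
    + apply Cminus_0.
    + apply Cminus_self.
Qed.

Lemma Qn_eq n c i : Qn n c i = if Nat.leb i n then RtoC 0 else c i.
Proof.
  unfold Qn, Pn. destruct (Nat.leb i n). apply Cminus_self. apply Cminus_0.
Qed.

Lemma T_ext a d d' i : (forall k, d k = d' k) -> Toeplitz a d i = Toeplitz a d' i.
Proof.
  intros h. unfold Toeplitz, csum. f_equal; apply Series_ext; intros k; rewrite h; reflexivity.
Qed.

Lemma T_bump a j v i : Toeplitz a (fun k => if Nat.eqb k j then v else RtoC 0) i =
  Cmult (a (Z.of_nat i - Z.of_nat j)%Z) v.
Proof.
  unfold Toeplitz, csum. apply C_eq; simpl.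
  - rewrite (Series_ext _ (fun k => if Nat.eqb k j then fst (Cmult (a (Z.of_nat i - Z.of_nat j)%Z) v) else 0)).
    apply bump_Series.
    intros k. destruct (Nat.eqb_spec k j). subst. reflexivity.
    simpl; ring.
  - rewrite (Series_ext _ (fun k => if Nat.eqb k j then snd (Cmult (a (Z.of_nat i - Z.of_nat j)%Z) v) else 0)).
    apply bump_Series.
    intros k. destruct (Nat.eqb_spec k j). subst. reflexivity.
    simpl; ring.
Qed.

Lemma op1_eq a n j c i :
  compo (Qn n) (compo (Toeplitz a) (DeltaJ j)) c i =
  if Nat.leb i n then RtoC 0 else Cmult (a (Z.of_nat i - Z.of_nat j)%Z) (c j).
Proof.
  unfold compo. rewrite Qn_eq. destruct (Nat.leb i n); auto.
  rewrite (T_ext a _ (fun k => if Nat.eqb k j then c j else RtoC 0)).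
  apply T_bump.
  intros k. rewrite DeltaJ_eq. destruct (Nat.eqb_spec k j); subst; reflexivity.
Qed.

Lemma op2_eq a n j c i :
  compo (DeltaJ j) (compo (Toeplitz a) (Qn n)) c i =
  if Nat.eqb i j then Toeplitz a (Qn n c) j else RtoC 0.
Proof.
  unfold compo. rewrite DeltaJ_eq. destruct (Nat.eqb_spec i j); subst; reflexivity.
Qed.

Lemma sqrt2_le2 : sqrt 2 <= 2.
Proof.
  rewrite <- (sqrt_square 2) at 2 by lra. apply sqrt_le_1_alt. lra.
Qed.

Lemma csum_bound (u : nat -> Complex.C) (B : nat -> R) :
  (forall k, Cmod (u k) <= B k) -> ex_series B -> Cmod (csum u) <= 2 * Series B.
Proof.
  intros hu hB.
  assert (h1 : forall k, Rabs (fst (u k)) <= B k).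
  { intros k. pose proof (Rmax_Cmod (u k)). pose proof (Rmax_l (Rabs (fst (u k))) (Rabs (snd (u k)))).
    specialize (hu k). lra. }
  assert (h2 : forall k, Rabs (snd (u k)) <= B k).
  { intros k. pose proof (Rmax_Cmod (u k)). pose proof (Rmax_r (Rabs (fst (u k))) (Rabs (snd (u k)))).
    specialize (hu k). lra. }
  assert (e1 : ex_series (fun k => Rabs (fst (u k)))).
  { apply (ex_series_le (V := R_CompleteNormedModule)) with B; auto.
    intros k. change (Rabs (Rabs (fst (u k))) <= B k). rewrite Rabs_Rabsolu. auto. }
  assert (e2 : ex_series (fun k => Rabs (snd (u k)))).
  { apply (ex_series_le (V := R_CompleteNormedModule)) with B; auto.
    intros k. change (Rabs (Rabs (snd (u k))) <= B k). rewrite Rabs_Rabsolu. auto. }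
  assert (s1 : Rabs (Series (fun k => fst (u k))) <= Series B).
  { eapply Rle_trans. apply Series_Rabs. exact e1. apply Series_le; auto.
    intros k; split; auto. apply Rabs_pos. }
  assert (s2 : Rabs (Series (fun k => snd (u k))) <= Series B).
  { eapply Rle_trans. apply Series_Rabs. exact e2. apply Series_le; auto.
    intros k; split; auto. apply Rabs_pos. }
  unfold csum. eapply Rle_trans. apply Cmod_2Rmax. simpl.
  assert (hm : Rmax (Rabs (Series (fun k => fst (u k)))) (Rabs (Series (fun k => snd (u k)))) <= Series B).
  { apply Rmax_lub; auto. }
  pose proof sqrt2_le2. pose proof (Rle_trans _ _ _ (Rabs_pos _) s1).
  assert (0 <= sqrt 2) by apply sqrt_pos.
  pose proof (Rmax_l (Rabs (Series (fun k => fst (u k)))) (Rabs (Series (fun k => snd (u k))))).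
  pose proof (Rabs_pos (Series (fun k => fst (u k)))).
  nra.
Qed.
Lemma trunc_pos a N k : (N < k)%nat -> csub a (trunc N a) (Z.of_nat k) = a (Z.of_nat k).
Proof.
  intros h. unfold csub, trunc.
  destruct (Z.leb_spec (Z.of_nat k) (Z.of_nat N)); try lia.
  rewrite Bool.andb_false_r. apply Cminus_0.
Qed.

Lemma trunc_neg a N k : (N < k)%nat -> csub a (trunc N a) (- Z.of_nat k)%Z = a (- Z.of_nat k)%Z.
Proof.
  intros h. unfold csub, trunc.
  destruct (Z.leb_spec (- Z.of_nat N) (- Z.of_nat k)); try lia.
  simpl. apply Cminus_0.
Qed.

Lemma trunc_cmod a N k : Cmod (csub a (trunc N a) k) <= Cmod (a k).
Proof.
  unfold csub, trunc. destruct (_ && _)%bool.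
  - rewrite Cminus_self. rewrite Cmod_0. apply Cmod_ge_0.
  - rewrite Cminus_0. lra.
Qed.

Lemma weight_mono nu k l : weight_W nu -> (k <= l)%nat -> nu k <= nu l.
Proof. intros [_ [_ [h _]]] hkl. auto. Qed.

Lemma weight_pos nu k : weight_W nu -> 0 < nu k.
Proof. intros [_ [h _]]. auto. Qed.

Lemma op_norm_le Th A K : 0 <= K ->
  (forall c, in_lTheta Th c -> in_lTheta Th (A c) /\ lTheta_norm Th (A c) <= K * lTheta_norm Th c) ->
  Rbar_le (op_norm Th A) (Finite K).
Proof.
  intros hK h. unfold op_norm.
  destruct (Glb_Rbar_correct (fun K => 0 <= K /\ forall c, in_lTheta Th c ->
      in_lTheta Th (A c) /\ lTheta_norm Th (A c) <= K * lTheta_norm Th c)) as [hlb _].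
  apply hlb. split; auto.
Qed.

Lemma adm_from_series Th x bnd lam : thetaP Th -> (forall k, 0 <= x k) ->
  (forall k, Th (x k) <= bnd k) -> ex_series bnd -> lam = 1 -> exists mu, adm Th x mu.
Proof.
  intros hth hx hb he ->. destruct hth as [h0 [hn [hm hc]]] eqn:E.
  apply (adm_exists Th x 1); auto. lra.
  apply (ex_series_le (V := R_CompleteNormedModule)) with bnd; auto.
  intros k. change (Rabs (Th (x k / 1)) <= bnd k). rewrite Rdiv_1.
  rewrite Rabs_right. auto. apply Rle_ge, hn, hx.
Qed.
Lemma part1 p psi a n j t0 : N_generator p -> 0 < t0 ->
  (forall x, 0 <= x -> Psi_of p x <= 1 -> x <= t0) -> weight_W psi ->
  ex_series (fun k => Psi_of p (Cmod (a (Z.of_nat k)) * psi k)) -> (j <= n)%nat ->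
  forall c, in_lTheta (Psi_of p) c ->
  in_lTheta (Psi_of p) (compo (Qn n) (compo (Toeplitz a) (DeltaJ j)) c) /\
  lTheta_norm (Psi_of p) (compo (Qn n) (compo (Toeplitz a) (DeltaJ j)) c) <=
   (t0 * lux_norm (Psi_of p) (fun k => Cmod (csub a (trunc (n - j) a) (Z.of_nat k)) * psi k)
     / psi (n - j + 1)%nat) * lTheta_norm (Psi_of p) c.
Proof.
  intros hp ht0 Ht0 hpsi hF hj c [lc [hlc hec]].
  set (Ps := Psi_of p).
  assert (hth : thetaP Ps) by exact (good_thetaP (q_of p) (q_good p hp)).
  pose proof hth as [h0 [hn [hm hc]]].
  set (y := fun k => Cmod (csub a (trunc (n - j) a) (Z.of_nat k)) * psi k).
  set (xc := fun k => Cmod (c k)).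
  set (m := (n - j + 1)%nat).
  assert (hpm : 0 < psi m) by (apply weight_pos; auto).
  assert (hadmc : exists l, adm Ps xc l).
  { apply (adm_exists Ps xc lc); auto. intros; apply Cmod_ge_0. }
  assert (hady : exists l, adm Ps y l).
  { apply (adm_from_series Ps y (fun k => Ps (Cmod (a (Z.of_nat k)) * psi k)) 1); auto.
    - intros k. unfold y. apply Rmult_le_pos. apply Cmod_ge_0. apply Rlt_le, weight_pos; auto.
    - intros k. unfold y. apply hm. apply Rmult_le_pos. apply Cmod_ge_0. apply Rlt_le, weight_pos; auto.
      apply Rmult_le_compat_r. apply Rlt_le, weight_pos; auto. apply trunc_cmod. }
  set (A := compo (Qn n) (compo (Toeplitz a) (DeltaJ j))).
  set (xA := fun i => Cmod (A c i)).
  assert (core : forall l mu, adm Ps xc l -> adm Ps y mu -> adm Ps xA (t0 * l * mu / psi m)).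
  { intros l mu [hl [hel hsl]] [hmu [hey hsy]].
    assert (hnnc : forall k, 0 <= Ps (xc k / l)).
    { intros k. apply hn. apply Rdiv_le_0_compat; auto. apply Cmod_ge_0. }
    assert (hcj : xc j / l <= t0).
    { apply Ht0. apply Rdiv_le_0_compat; auto. apply Cmod_ge_0.
      eapply Rle_trans. apply (term_le_Series (fun k => Ps (xc k / l)) j); auto. exact hsl. }
    assert (hnny : forall k, 0 <= Ps (y k / mu)).
    { intros k. apply hn. apply Rdiv_le_0_compat; auto. unfold y.
      apply Rmult_le_pos. apply Cmod_ge_0. apply Rlt_le, weight_pos; auto. }
    destruct (shift_series (fun k => Ps (y k / mu)) n j hnny hey ltac:(lia)) as [hwe hws].
    set (nu := t0 * l * mu / psi m).
    assert (hnu : 0 < nu).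
    { unfold nu. apply Rdiv_lt_0_compat; auto. apply Rmult_lt_0_compat; auto. apply Rmult_lt_0_compat; auto. }
    assert (hb : forall i, 0 <= Ps (xA i / nu) <=
               (if Nat.ltb n i then Ps (y (i - j)%nat / mu) else 0)).
    { intros i. unfold xA, A. rewrite op1_eq.
      destruct (Nat.leb_spec i n); destruct (Nat.ltb_spec n i); try lia.
      - rewrite Cmod_0. replace (0 / nu) with 0 by (field; lra). rewrite h0. lra.
      - rewrite Cmod_mult.
        assert (hZ : (Z.of_nat i - Z.of_nat j)%Z = Z.of_nat (i - j)) by lia.
        rewrite hZ.
        assert (hy : y (i - j)%nat = Cmod (a (Z.of_nat (i - j))) * psi (i - j)%nat).
        { unfold y. rewrite trunc_pos by lia. reflexivity. }
        rewrite hy.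
        set (A0 := Cmod (a (Z.of_nat (i - j)))).
        set (X := Cmod (c j)).
        assert (hA0 : 0 <= A0) by apply Cmod_ge_0.
        assert (hX : 0 <= X) by apply Cmod_ge_0.
        assert (hXl : X / (t0 * l) <= 1).
        { fold xc in hcj. change (xc j) with X in hcj.
          apply Rmult_le_reg_r with (t0 * l). apply Rmult_lt_0_compat; auto.
          field_simplify; try lra.
          apply Rmult_le_reg_r with (/ l). apply Rinv_0_lt_compat; auto.
          replace (X * / l) with (X / l) by reflexivity.
          replace (t0 * l * / l) with t0 by (field; lra). exact hcj. }
        assert (hpmij : psi m <= psi (i - j)%nat) by (apply weight_mono; auto; unfold m; lia).
        replace (A0 * X / nu) with ((A0 * psi m / mu) * (X / (t0 * l))) by (unfold nu; field; repeat split; lra).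
        assert (hq1 : 0 <= A0 * psi m / mu).
        { apply Rdiv_le_0_compat; auto. apply Rmult_le_pos; lra. }
        assert (hq2 : 0 <= X / (t0 * l)).
        { apply Rdiv_le_0_compat; auto. apply Rmult_lt_0_compat; auto. }
        split.
        + apply hn. apply Rmult_le_pos; auto.
        + apply hm. apply Rmult_le_pos; auto.
          apply Rle_trans with (A0 * psi m / mu * 1).
          apply Rmult_le_compat_l; auto.
          rewrite Rmult_1_r. unfold Rdiv. apply Rmult_le_compat_r. apply Rlt_le, Rinv_0_lt_compat; auto.
          apply Rmult_le_compat_l; auto. }
    split; [exact hnu|split].
    - apply (ex_series_le (V := R_CompleteNormedModule)) with (fun i => if Nat.ltb n i then Ps (y (i - j)%nat / mu) else 0); auto.
      intros i. specialize (hb i). change (Rabs (Ps (xA i / nu)) <= (if Nat.ltb n i then Ps (y (i - j)%nat / mu) else 0)).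
      rewrite Rabs_right; lra.
    - eapply Rle_trans. apply Series_le. exact hb. exact hwe. lra. }
  destruct hadmc as [l0 hl0]. destruct hady as [mu0 hmu0].
  split.
  - exists (t0 * l0 * mu0 / psi m). destruct (core l0 mu0 hl0 hmu0) as [h1 [h2 _]]. split; auto.
  - change (lux_norm Ps xA <= t0 * lux_norm Ps y / psi m * lux_norm Ps xc).
    assert (step1 : forall mu, adm Ps y mu -> lux_norm Ps xA <= (t0 * mu / psi m) * lux_norm Ps xc).
    { intros mu hmu. apply lux_ge. exists l0; auto.
      apply Rlt_le, Rdiv_lt_0_compat; auto. apply Rmult_lt_0_compat; auto. destruct hmu; auto.
      intros l hl. eapply Rle_trans. apply lux_le. apply core; eauto. right. field. lra. }
    assert (step2 : lux_norm Ps xA <= (t0 * lux_norm Ps xc / psi m) * lux_norm Ps y).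
    { apply lux_ge. exists mu0; auto.
      apply Rdiv_le_0_compat; auto. apply Rmult_le_pos; try lra. apply lux_nonneg.
      intros mu hmu. eapply Rle_trans. apply (step1 mu hmu). right. field. lra. }
    eapply Rle_trans. exact step2. right. field. lra.
Qed.
Lemma part2 p phi a n j u0 : N_generator p -> 0 < u0 -> Psi_of p u0 <= 1 -> weight_W phi ->
  ex_series (fun k => Phi_of p (Cmod (a (- Z.of_nat (S k))%Z) * phi (S k))) -> (j <= n)%nat ->
  forall c, in_lTheta (Psi_of p) c ->
  in_lTheta (Psi_of p) (compo (DeltaJ j) (compo (Toeplitz a) (Qn n)) c) /\
  lTheta_norm (Psi_of p) (compo (DeltaJ j) (compo (Toeplitz a) (Qn n)) c) <=
   (16 / u0 * lux_norm (Phi_of p) (fun k => Cmod (csub a (trunc (n - j) a) (- Z.of_nat (S k))%Z) * phi (S k))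
     / phi (n - j + 1)%nat) * lTheta_norm (Psi_of p) c.
Proof.
  intros hp hu0 Hu0 hphi hF hj c [lc [hlc hec]].
  set (Ps := Psi_of p). set (Ph := Phi_of p).
  assert (hth : thetaP Ps) by exact (good_thetaP (q_of p) (q_good p hp)).
  assert (hthF : thetaP Ph) by exact (good_thetaP p (p_good p hp)).
  pose proof hth as [h0 [hn [hm hc]]].
  pose proof hthF as [h0F [hnF [hmF hcF]]].
  set (z := fun k => Cmod (csub a (trunc (n - j) a) (- Z.of_nat (S k))%Z) * phi (S k)).
  set (xc := fun k => Cmod (c k)).
  set (m := (n - j + 1)%nat).
  assert (hpm : 0 < phi m) by (apply weight_pos; auto).
  assert (hadmc : exists l, adm Ps xc l).
  { apply (adm_exists Ps xc lc); auto. intros; apply Cmod_ge_0. }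
  assert (hadz : exists l, adm Ph z l).
  { apply (adm_from_series Ph z (fun k => Ph (Cmod (a (- Z.of_nat (S k))%Z) * phi (S k))) 1); auto.
    - intros k. unfold z. apply Rmult_le_pos. apply Cmod_ge_0. apply Rlt_le, weight_pos; auto.
    - intros k. unfold z. apply hmF. apply Rmult_le_pos. apply Cmod_ge_0. apply Rlt_le, weight_pos; auto.
      apply Rmult_le_compat_r. apply Rlt_le, weight_pos; auto. apply trunc_cmod. }
  set (A := compo (DeltaJ j) (compo (Toeplitz a) (Qn n))).
  set (xA := fun i => Cmod (A c i)).
  set (s := Toeplitz a (Qn n c) j).
  assert (core : forall l mu, adm Ps xc l -> adm Ph z mu -> Cmod s <= 16 * mu * l / phi m).
  { intros l mu [hl [hel hsl]] [hmu [hez hsz]].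
    assert (hnnc : forall k, 0 <= Ps (xc k / l)).
    { intros k. apply hn. apply Rdiv_le_0_compat; auto. apply Cmod_ge_0. }
    assert (hnnz : forall k, 0 <= Ph (z k / mu)).
    { intros k. apply hnF. apply Rdiv_le_0_compat; auto. unfold z.
      apply Rmult_le_pos. apply Cmod_ge_0. apply Rlt_le, weight_pos; auto. }
    destruct (shift_series (fun k => Ph (z k / mu)) n (S j) hnnz hez ltac:(lia)) as [hwe hws].
    set (w := fun i => if Nat.ltb n i then Ph (z (i - S j)%nat / mu) else 0) in *.
    assert (hw0 : forall k, 0 <= w k).
    { intros k. unfold w. destruct (Nat.ltb n k); auto. lra. }
    set (l1 := mu / phi m).
    assert (hl1 : 0 < l1) by (apply Rdiv_lt_0_compat; auto).
    set (B := fun k => 4 * l1 * l * (w k + Ps (xc k / l))).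
    assert (hBe : ex_series B).
    { apply ex_series_ext with (fun k => scal (4 * l1 * l) (plus (w k) (Ps (xc k / l)))).
      intros k. reflexivity.
      apply (ex_series_scal_l (V := R_NormedModule)).
      apply (ex_series_plus (V := R_NormedModule)); auto. }
    assert (hBs : Series B <= 8 * l1 * l).
    { unfold B. rewrite Series_scal_l. rewrite Series_plus; auto.
      assert (0 <= 4 * l1 * l) by (apply Rmult_le_pos; lra).
      replace (8 * l1 * l) with (4 * l1 * l * 2) by ring.
      apply Rmult_le_compat_l; auto. fold Ps in hsl. lra. }
    assert (hbound : forall k, Cmod (Cmult (a (Z.of_nat j - Z.of_nat k)%Z) (Qn n c k)) <= B k).
    { intros k. rewrite Cmod_mult, Qn_eq.
      assert (hB0 : 0 <= B k).
      { unfold B. apply Rmult_le_pos. apply Rmult_le_pos; lra.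
        specialize (hw0 k). specialize (hnnc k). lra. }
      destruct (Nat.leb_spec k n).
      - rewrite Cmod_0, Rmult_0_r. exact hB0.
      - set (X := Cmod (a (Z.of_nat j - Z.of_nat k)%Z)).
        assert (hX : 0 <= X) by apply Cmod_ge_0.
        assert (hxc : 0 <= xc k) by apply Cmod_ge_0.
        change (Cmod (c k)) with (xc k).
        pose proof (young p (X / (2 * l1)) (xc k / (2 * l)) hp
           ltac:(apply Rdiv_le_0_compat; lra) ltac:(apply Rdiv_le_0_compat; lra)) as hy.
        replace (2 * (X / (2 * l1))) with (X / l1) in hy by (field; lra).
        replace (2 * (xc k / (2 * l))) with (xc k / l) in hy by (field; lra).
        assert (hwk : Phi_of p (X / l1) <= w k).
        { unfold w. destruct (Nat.ltb_spec n k); try lia.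
          unfold z. replace (S (k - S j)) with (k - j)%nat by lia.
          rewrite trunc_neg by lia.
          replace (- Z.of_nat (k - j))%Z with (Z.of_nat j - Z.of_nat k)%Z by lia.
          fold X. apply hmF. apply Rdiv_le_0_compat; auto.
          unfold l1. replace (X / (mu / phi m)) with (X * phi m / mu) by (field; lra).
          unfold Rdiv. apply Rmult_le_compat_r. apply Rlt_le, Rinv_0_lt_compat; auto.
          apply Rmult_le_compat_l; auto. apply weight_mono; auto. unfold m; lia. }
        replace (X * xc k) with (4 * l1 * l * (X / (2 * l1) * (xc k / (2 * l)))) by (field; lra).
        unfold B. apply Rmult_le_compat_l. apply Rmult_le_pos; lra.
        fold Ph in hy, hwk. fold Ps in hy. lra. }
    pose proof (csum_bound _ B hbound hBe) as hcs.
    change (Cmod s <= 16 * mu * l / phi m).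
    unfold s, Toeplitz.
    eapply Rle_trans. exact hcs.
    replace (16 * mu * l / phi m) with (2 * (8 * l1 * l)) by (unfold l1; field; lra). lra. }
  assert (hadmA : forall l mu, adm Ps xc l -> adm Ph z mu -> adm Ps xA (16 * mu * l / (phi m * u0))).
  { intros l mu hl hmu. pose proof (core l mu hl hmu) as hs.
    destruct hl as [hl _]. destruct hmu as [hmu _].
    set (nu := 16 * mu * l / (phi m * u0)).
    assert (hnu : 0 < nu).
    { unfold nu. apply Rdiv_lt_0_compat. nra. nra. }
    assert (hext : forall i, Ps (xA i / nu) = if Nat.eqb i j then Ps (Cmod s / nu) else 0).
    { intros i. unfold xA, A. rewrite op2_eq. fold s.
      destruct (Nat.eqb i j); auto. rewrite Cmod_0. replace (0 / nu) with 0 by (field; lra). exact h0. }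
    split; [exact hnu|split].
    - eapply ex_series_ext. intros i; symmetry; apply hext. apply bump_ex.
    - rewrite (Series_ext _ _ hext). rewrite bump_Series.
      eapply Rle_trans; [|exact Hu0]. apply hm.
      apply Rdiv_le_0_compat; auto. apply Cmod_ge_0.
      apply Rmult_le_reg_r with nu; auto.
      replace (Cmod s / nu * nu) with (Cmod s) by (field; lra).
      unfold nu. replace (u0 * (16 * mu * l / (phi m * u0))) with (16 * mu * l / phi m) by (field; lra).
      exact hs. }
  destruct hadmc as [l0 hl0]. destruct hadz as [mu0 hmu0].
  split.
  - exists (16 * mu0 * l0 / (phi m * u0)). destruct (hadmA l0 mu0 hl0 hmu0) as [h1 [h2 _]]. split; auto.
  - change (lux_norm Ps xA <= 16 / u0 * lux_norm Ph z / phi m * lux_norm Ps xc).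
    assert (step1 : forall mu, adm Ph z mu -> lux_norm Ps xA <= (16 * mu / (phi m * u0)) * lux_norm Ps xc).
    { intros mu hmu. apply lux_ge. exists l0; auto.
      destruct hmu as [hmu _]. apply Rlt_le, Rdiv_lt_0_compat; nra.
      intros l hl. eapply Rle_trans. apply lux_le. apply (hadmA l mu hl hmu). right. field. lra. }
    assert (step2 : lux_norm Ps xA <= (16 * lux_norm Ps xc / (phi m * u0)) * lux_norm Ph z).
    { apply lux_ge. exists mu0; auto.
      pose proof (lux_nonneg Ps xc). apply Rdiv_le_0_compat; nra.
      intros mu hmu. eapply Rle_trans. apply (step1 mu hmu). right. field. lra. }
    eapply Rle_trans. exact step2. right. field. lra.
Qed.
Theorem lemma3p6 :
  forall (p : R -> R), N_generator p ->
  Delta2_0 (Phi_of p) -> Delta2_0 (Psi_of p) ->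
  forall (phi psi : nat -> R), weight_W phi -> weight_W psi ->
  exists C : R, 0 < C /\
    forall (a : coeffs), in_Wiener a -> in_Fl (Phi_of p) (Psi_of p) phi psi a ->
    forall (n j : nat), (1 <= n)%nat -> (j <= n)%nat ->
      Rbar_le (op_norm (Psi_of p) (compo (Qn n) (compo (Toeplitz a) (DeltaJ j))))
        (Finite (C * Fl_norm (Phi_of p) (Psi_of p) phi psi
                       (csub a (trunc (n - j)%nat a)) / psi (n - j + 1)%nat)) /\
      Rbar_le (op_norm (Psi_of p) (compo (DeltaJ j) (compo (Toeplitz a) (Qn n))))
        (Finite (C * Fl_norm (Phi_of p) (Psi_of p) phi psi
                       (csub a (trunc (n - j)%nat a)) / phi (n - j + 1)%nat)).
Proof.
  intros p hp _ _ phi psi hphi hpsi.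
  destruct (psi_t0 p hp) as [t0 [ht0 Ht0]].
  destruct (psi_u0 p hp) as [u0 [hu0 Hu0]].
  assert (h16 : 0 < 16 / u0) by (apply Rdiv_lt_0_compat; lra).
  exists (t0 + 16 / u0). split. lra.
  intros a _ [hF1 hF2] n j _ hj.
  set (z := fun k => Cmod (csub a (trunc (n - j) a) (- Z.of_nat (S k))%Z) * phi (S k)).
  set (y := fun k => Cmod (csub a (trunc (n - j) a) (Z.of_nat k)) * psi k).
  assert (hFl : Fl_norm (Phi_of p) (Psi_of p) phi psi (csub a (trunc (n - j) a)) =
     lux_norm (Phi_of p) z + lux_norm (Psi_of p) y) by reflexivity.
  pose proof (lux_nonneg (Phi_of p) z) as hz. pose proof (lux_nonneg (Psi_of p) y) as hy.
  pose proof (weight_pos psi (n - j + 1) hpsi) as hps.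
  pose proof (weight_pos phi (n - j + 1) hphi) as hph.
  rewrite hFl. split.
  - apply op_norm_le.
    + apply Rdiv_le_0_compat; auto. apply Rmult_le_pos; lra.
    + intros c hc. destruct (part1 p psi a n j t0 hp ht0 Ht0 hpsi hF2 hj c hc) as [h1 h2].
      split; auto. eapply Rle_trans. exact h2. fold y.
      apply Rmult_le_compat_r. apply lux_nonneg.
      unfold Rdiv. apply Rmult_le_compat_r. apply Rlt_le, Rinv_0_lt_compat; auto.
      apply Rmult_le_compat; lra.
  - apply op_norm_le.
    + apply Rdiv_le_0_compat; auto. apply Rmult_le_pos; lra.
    + intros c hc. destruct (part2 p phi a n j u0 hp hu0 Hu0 hphi hF1 hj c hc) as [h1 h2].
      split; auto. eapply Rle_trans. exact h2. fold z.
      apply Rmult_le_compat_r. apply lux_nonneg.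
      unfold Rdiv. apply Rmult_le_compat_r. apply Rlt_le, Rinv_0_lt_compat; auto.
      replace (16 * / u0 * lux_norm (Phi_of p) z) with (16 / u0 * lux_norm (Phi_of p) z) by reflexivity.
      apply Rmult_le_compat; lra.
Qed.
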